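(* Let $\gamma$ be an orbit of the regularized planar two-center problem lying on a regular torus $\mathbb{T}$ with rotation number $W$. If $\gamma$ passes through collision points at two distinct times (i.e. $\gamma$ contains an orbit segment connecting two collisions), then $W$ is rational.
   Context: Fix $d>0$ and masses $m_1,m_2>0$ at $(-d,0)$ and $(d,0)$. A test particle moves with Hamiltonian $H=\tfrac12(p_x^2+p_y^2)-m_1/\sqrt{(x+d)^2+y^2}-m_2/\sqrt{(x-d)^2+y^2}$; energies $h<0$. Regularization: $(\lambda,\nu)\in\mathbb{R}\times(\mathbb{R}/2\pi\mathbb{Z})$ with $x+iy=d\sin(\nu+i\lambda)$ (a double cover branched over the centers), conjugate momenta $p_\lambda,p_\nu$, time change $dt=d^2(\cosh^2\lambda-\sin^2\nu)\,d\tau$. On $H=h$ the motion becomes the flow (time $\tau$, defined also through collisions) of $H_\lambda+H_\nu$ on its zero level, $H_\lambda=\tfrac12p_\lambda^2-d(m_1+m_2)\cosh\lambda-hd^2\cosh^2\lambda$, $H_\nu=\tfrac12p_\nu^2+d(m_1-m_2)\sin\nu+hd^2\sin^2\nu$; orbits lie in sets $\{H_\lambda=-g,\ H_\nu=g\}$ for a separation constant $g$. Regular torus: a compact connected component $\mathbb{T}=C_\lambda\times C_\nu$ of such a set with $-g$ a regular value of $H_\lambda$ and $g$ a regular value of $H_\nu$ ($C_\lambda$ a closed curve in the $(\lambda,p_\lambda)$-plane, $C_\nu$ a closed curve in the cylinder $(\mathbb{R}/2\pi\mathbb{Z})\times\mathbb{R}$). Rotation number $W=T_\nu/T_\lambda$,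 where $T_\lambda,T_\nu$ are the $\tau$-periods of the motions on $C_\lambda,C_\nu$; in angle coordinates $\theta_1$ along $C_\nu$, $\theta_2$ along $C_\lambda$ (each in $\mathbb{R}/\mathbb{Z}$, increasing uniformly in $\tau$ with period 1) orbits on $\mathbb{T}$ lift to lines $\theta_2=W\theta_1+\mathrm{const}$. Collision points are the points of $\mathbb{T}$ with $\lambda=0$ and $\nu\equiv\pm\pi/2 \pmod{2\pi}$ (they project to the two centers). *)

(* Defs.v *)
From HB Require Import structures.
From mathcomp Require Import all_boot all_order all_algebra.
From mathcomp Require Import all_classical all_reals all_analysis.
Set Implicit Arguments. Unset Strict Implicit. Unset Printing Implicit Defensive.
Import Order.TTheory GRing.Theory Num.Theory.
Import numFieldNormedType.Exports.
Local Open Scope classical_set_scope.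
Local Open Scope ring_scope.

Section TwoCenter.
Variable R : realType.

Definition coshR (x : R) : R := (expR x + expR (- x)) / 2.

Definition Hlam (d m1 m2 h : R) (l p : R) : R :=
  p ^+ 2 / 2 - d * (m1 + m2) * coshR l - h * d ^+ 2 * (coshR l) ^+ 2.

Definition Hnu (d m1 m2 h : R) (n p : R) : R :=
  p ^+ 2 / 2 + d * (m1 - m2) * sin n + h * d ^+ 2 * (sin n) ^+ 2.

Definition regular_value (H : R -> R -> R) (c : R) : Prop :=
  forall x p, H x p = c ->
    derive1 (fun y => H y p) x != 0 \/ derive1 (fun q => H x q) p != 0.

(* embedding of the cylinder (R/2piZ) x R into R^3 *)
Definition cyl (x : R * R) : R * R * R := (cos x.1, sin x.1, x.2).

(* (lam, plam, nu, pnu) is an orbit (time tau) of the flow of Hlam + Hnu;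
   nu is a real lift of the angle nu in R/2piZ *)
Definition is_orbit (d m1 m2 h : R) (lam plam nu pnu : R -> R) : Prop :=
  forall t,
    [/\ derivable lam t 1, derivable plam t 1, derivable nu t 1,
        derivable pnu t 1 &
     [/\ derive1 lam t = derive1 (fun q => Hlam d m1 m2 h (lam t) q) (plam t),
         derive1 plam t = - derive1 (fun y => Hlam d m1 m2 h y (plam t)) (lam t),
         derive1 nu t = derive1 (fun q => Hnu d m1 m2 h (nu t) q) (pnu t) &
         derive1 pnu t = - derive1 (fun y => Hnu d m1 m2 h y (pnu t)) (nu t)]].

Definition min_period (X : Type) (f : R -> X) (T : R) : Prop :=
  [/\ 0 < T, (forall t, f (t + T) = f t) &
      forall T', 0 < T' < T -> ~ (forall t, f (t + T') = f t)].

Definition collision (lam nu : R -> R) (t : R) : Prop :=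
  lam t = 0 /\ exists k : int,
    nu t = pi / 2 + k%:~R * (2 * pi) \/ nu t = - (pi / 2) + k%:~R * (2 * pi).

End TwoCenter.

(* Main.v *)
Require Import Defs.
From HB Require Import structures.
From mathcomp Require Import all_boot all_order all_algebra.
From mathcomp Require Import all_classical all_reals all_analysis.
From mathcomp Require Import ring lra.
Import Order.TTheory GRing.Theory Num.Theory.
Import numFieldNormedType.Exports.
Local Open Scope classical_set_scope.
Local Open Scope ring_scope.
Set Implicit Arguments. Unset Strict Implicit.
Section S.
Variable R : realType.
Lemma der_cont (f df : R -> R) : (forall x : R, is_derive x (1:R) f (df x)) -> continuous f.
Proof.
move=> H x; apply/differentiable_continuous/derivable1_diffP.
by case: (H x).
Qed.

Lemma lip_of_der (F F' : R -> R) (B K : R) :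
  (forall x : R, is_derive x (1:R) F (F' x)) ->
  (forall x, `|x| <= B -> `|F' x| <= K) ->
  forall a b, `|a| <= B -> `|b| <= B -> `|F a - F b| <= K * `|a - b|.
Proof.
move=> dF bF.
have key : forall a b, a <= b -> `|a| <= B -> `|b| <= B -> `|F a - F b| <= K * `|a - b|.
  move=> a b ab ha hb.
  have [c cab E] := @MVT_segment R F F' a b ab (fun x _ => dF x)
     (continuous_subspaceT (der_cont dF)).
  rewrite distrC E normrM distrC.
  apply: ler_wpM2r => //; apply: bF.
  move: cab; rewrite in_itv /= => /andP[ac cb].
  rewrite ler_norml; apply/andP; split.
    apply: le_trans ac; rewrite lerNl; apply: le_trans ha.
    by rewrite -normrN ler_norm.
  by apply: le_trans cb _; apply: le_trans hb; rewrite ler_norm.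
move=> a b ha hb; case: (leP a b) => ab; first exact: key.
by rewrite distrC (distrC a); apply: key => //; rewrite ltW.
Qed.

Definition locLip (F : R -> R) := forall B : R, exists K : R, 0 <= K /\
  forall a b, `|a| <= B -> `|b| <= B -> `|F a - F b| <= K * `|a - b|.

Lemma key_ineq (a b c K : R) : 0 <= K -> `|c| <= K * `|a| ->
  2 * a * b + 2 * b * c - (1 + K) * (a ^+ 2 + b ^+ 2) <= 0.
Proof.
move=> K0 hc.
have h1 : b * c <= `|b| * `|c| by rewrite -normrM ler_norm.
have h2 : `|b| * `|c| <= `|b| * (K * `|a|) by rewrite ler_wpM2l.
have ea : a ^+ 2 = `|a| ^+ 2 by rewrite real_normK // num_real.
have eb : b ^+ 2 = `|b| ^+ 2 by rewrite real_normK // num_real.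
have h3 := mulr_ge0 K0 (sqr_ge0 (`|a| - `|b|)).
have h4 := sqr_ge0 (a - b).
rewrite ea eb in h4 *.
nra.
Qed.

Lemma uniq_fwd (F : R -> R) (x1 y1 x2 y2 : R -> R) (t0 : R) :
  locLip F ->
  (forall t : R, is_derive t (1:R) x1 (y1 t)) ->
  (forall t : R, is_derive t (1:R) y1 (F (x1 t))) ->
  (forall t : R, is_derive t (1:R) x2 (y2 t)) ->
  (forall t : R, is_derive t (1:R) y2 (F (x2 t))) ->
  x1 t0 = x2 t0 -> y1 t0 = y2 t0 ->
  forall T, t0 <= T -> x1 T = x2 T /\ y1 T = y2 T.
Proof.
move=> LF dx1 dy1 dx2 dy2 e0 f0 T t0T.
have cx1 := der_cont dx1; have cx2 := der_cont dx2.
have cy1 := der_cont dy1; have cy2 := der_cont dy2.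
have cs : continuous (fun t => `|x1 t| + `|x2 t|).
  move=> t; apply: (@continuousD _ _ _ (fun t => `|x1 t|) (fun t => `|x2 t|)).
    exact: (continuous_comp (cx1 t) (@norm_continuous _ _ _)).
  exact: (continuous_comp (cx2 t) (@norm_continuous _ _ _)).
have [c _ cmax] := EVT_max t0T (continuous_subspaceT cs).
have [K [K0 HK]] := LF (`|x1 c| + `|x2 c|).
set K' := 1 + K.
pose g t := ((x1 t - x2 t) ^+ 2 + (y1 t - y2 t) ^+ 2) * expR (- K' * t).
pose D t := expR (- K' * t) * (2 * (x1 t - x2 t) * (y1 t - y2 t)
   + 2 * (y1 t - y2 t) * (F (x1 t) - F (x2 t))
   - K' * ((x1 t - x2 t) ^+ 2 + (y1 t - y2 t) ^+ 2)).
have dg : forall t, is_derive t (1:R) g (D t).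
  move=> t; rewrite /g /D; apply: is_derive_eq.
  by rewrite [in LHS]/GRing.scale /=; ring.
have cg : continuous g := der_cont dg.
have gle : g T <= g t0.
  apply: (@ler0_derive1_le_cc R g t0 T).
  - by move=> x _; case: (dg x).
  - move=> x xin; rewrite derive1E; have dgx := dg x; rewrite derive_val /D.
    rewrite pmulr_rle0 ?expR_gt0 //.
    have xin' : x \in `[t0, T] by move: xin; rewrite !in_itv /= => /andP[/ltW -> /ltW ->].
    have hb := cmax x xin'.
    have hx1 : `|x1 x| <= `|x1 c| + `|x2 c|.
      by apply: le_trans hb; rewrite lerDl.
    have hx2 : `|x2 x| <= `|x1 c| + `|x2 c|.
      by apply: le_trans hb; rewrite lerDr.
    have := HK _ _ hx1 hx2 => hc.
    have := key_ineq (y1 x - y2 x) K0 hc.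
    by rewrite /K'; congr (_ <= _); ring.
  - exact: continuous_subspaceT.
  - by rewrite in_itv /= t0T lexx.
  - by rewrite in_itv /= t0T lexx.
  - exact: t0T.
have g0 : g t0 = 0 by rewrite /g e0 f0 !subrr expr0n /= addr0 mul0r.
have gT : 0 <= g T by rewrite /g mulr_ge0 ?expR_ge0 // addr_ge0 // sqr_ge0.
have : g T = 0 by apply/le_anti; rewrite gT -g0 gle.
rewrite /g => /eqP; rewrite mulf_eq0 expR_eq0 orbF.
rewrite paddr_eq0 ?sqr_ge0 // !sqrf_eq0 !subr_eq0 => /andP[/eqP -> /eqP ->].
by [].
Qed.

Lemma is_derive_refl (f : R -> R) (a t df : R) :
  is_derive (a - t) (1:R) f df -> is_derive t (1:R) (fun s => f (a - s)) (- df).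
Proof.
move=> H.
have Hg : is_derive t (1:R) (fun s : R => a - s) (-1).
  by apply: is_derive_eq; rewrite add0r mul1r.
have := @is_derive1_comp R f (fun s : R => a - s) t df (-1) H Hg.
by rewrite mulrN1.
Qed.

Lemma uniq_all (F : R -> R) (x1 y1 x2 y2 : R -> R) (t0 : R) :
  locLip F ->
  (forall t : R, is_derive t (1:R) x1 (y1 t)) ->
  (forall t : R, is_derive t (1:R) y1 (F (x1 t))) ->
  (forall t : R, is_derive t (1:R) x2 (y2 t)) ->
  (forall t : R, is_derive t (1:R) y2 (F (x2 t))) ->
  x1 t0 = x2 t0 -> y1 t0 = y2 t0 ->
  forall T, x1 T = x2 T /\ y1 T = y2 T.
Proof.
move=> LF dx1 dy1 dx2 dy2 e0 f0 T.
case: (leP t0 T) => tT; first exact: (uniq_fwd LF dx1 dy1 dx2 dy2 e0 f0 tT).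
have r : forall (x y : R -> R), (forall t : R, is_derive t (1:R) x (y t)) ->
    (forall t : R, is_derive t (1:R) y (F (x t))) ->
    (forall t : R, is_derive t (1:R) (fun s => x (0 - s)) (- y (0 - t))) /\
    (forall t : R, is_derive t (1:R) (fun s => - y (0 - s)) (F (x (0 - t)))).
  move=> x y dx dy; split=> t; first exact: is_derive_refl.
  rewrite -[F _]opprK; apply: (@is_deriveN _ _ _ (fun s => y (0 - s))); exact: is_derive_refl.
have [a1 b1] := r _ _ dx1 dy1; have [a2 b2] := r _ _ dx2 dy2.
have := uniq_fwd LF a1 b1 a2 b2 (t0 := 0 - t0).
rewrite !sub0r !opprK f0 => /(_ e0 erefl (- T)).
rewrite lerN2 (ltW tT) !sub0r !opprK => /(_ erefl) [-> /eqP].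
by rewrite eqr_opp => /eqP ->.
Qed.


Definition sh (x : R) : R := (expR x - expR (- x)) / 2.

Lemma is_derive_expN (x : R) : is_derive x (1:R) (fun y => expR (- y)) (- expR (- x)).
Proof.
have := @is_derive1_comp R expR (fun y : R => - y) x (expR (- x)) (-1) _ _.
rewrite mulrN1; apply.
Qed.

Lemma is_derive_cosh (x : R) : is_derive x (1:R) (@coshR R) (sh x).
Proof.
rewrite /coshR /sh; apply: is_derive_eq.
by rewrite !scaler0 add0r /GRing.scale /=; ring.
Qed.

Lemma is_derive_sh (x : R) : is_derive x (1:R) sh (coshR x).
Proof.
rewrite /coshR /sh; apply: is_derive_eq.
by rewrite !scaler0 add0r /GRing.scale /=; ring.
Qed.

Definition Flam (d m1 m2 h x : R) : R :=
  d * (m1 + m2) * sh x + 2 * h * d ^+ 2 * coshR x * sh x.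
Definition Flam' (d m1 m2 h x : R) : R :=
  d * (m1 + m2) * coshR x + 2 * h * d ^+ 2 * (sh x ^+ 2 + coshR x ^+ 2).
Definition Fnu (d m1 m2 h x : R) : R :=
  - (d * (m1 - m2) * cos x + 2 * h * d ^+ 2 * sin x * cos x).
Definition Fnu' (d m1 m2 h x : R) : R :=
  d * (m1 - m2) * sin x - 2 * h * d ^+ 2 * (cos x ^+ 2 - sin x ^+ 2).

Lemma is_derive_Flam d m1 m2 h (x : R) :
  is_derive x (1:R) (Flam d m1 m2 h) (Flam' d m1 m2 h x).
Proof.
rewrite /Flam /Flam'.
have := is_derive_sh x; have := is_derive_cosh x => H1 H2.
apply: is_derive_eq.
by rewrite /GRing.scale /=; ring.
Qed.

Lemma is_derive_Fnu d m1 m2 h (x : R) :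
  is_derive x (1:R) (Fnu d m1 m2 h) (Fnu' d m1 m2 h x).
Proof.
rewrite /Fnu /Fnu'.
apply: is_derive_eq.
by rewrite /GRing.scale /=; ring.
Qed.

Lemma dHlam_p d m1 m2 h (l p : R) : derive1 (fun q => Hlam d m1 m2 h l q) p = p.
Proof.
rewrite derive1E /Hlam.
have H : is_derive p (1:R) (fun q => q ^+ 2 / 2 - d * (m1 + m2) * coshR l - h * d ^+ 2 * coshR l ^+ 2) p.
  by apply: is_derive_eq; rewrite /GRing.scale /=; field.
by rewrite derive_val.
Qed.

Lemma dHlam_l d m1 m2 h (l p : R) : derive1 (fun y => Hlam d m1 m2 h y p) l = - Flam d m1 m2 h l.
Proof.
rewrite derive1E /Hlam /Flam.
have := is_derive_cosh l => H1.
have H : is_derive l (1:R) (fun y => p ^+ 2 / 2 - d * (m1 + m2) * coshR y - h * d ^+ 2 * coshR y ^+ 2)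
   (- (d * (m1 + m2) * sh l + 2 * h * d ^+ 2 * coshR l * sh l)).
  by apply: is_derive_eq; rewrite /GRing.scale /=; field.
by rewrite derive_val.
Qed.

Lemma dHnu_p d m1 m2 h (l p : R) : derive1 (fun q => Hnu d m1 m2 h l q) p = p.
Proof.
rewrite derive1E /Hnu.
have H : is_derive p (1:R) (fun q => q ^+ 2 / 2 + d * (m1 - m2) * sin l + h * d ^+ 2 * sin l ^+ 2) p.
  by apply: is_derive_eq; rewrite /GRing.scale /=; field.
by rewrite derive_val.
Qed.

Lemma dHnu_l d m1 m2 h (l p : R) : derive1 (fun y => Hnu d m1 m2 h y p) l = - Fnu d m1 m2 h l.
Proof.
rewrite derive1E /Hnu /Fnu opprK.
have H : is_derive l (1:R) (fun y => p ^+ 2 / 2 + d * (m1 - m2) * sin y + h * d ^+ 2 * sin y ^+ 2)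
   (d * (m1 - m2) * cos l + 2 * h * d ^+ 2 * sin l * cos l).
  by apply: is_derive_eq; rewrite /GRing.scale /=; field.
by rewrite derive_val.
Qed.


Lemma locLip_of_der (F F' : R -> R) :
  (forall x : R, is_derive x (1:R) F (F' x)) ->
  (forall B : R, exists K, forall x, `|x| <= B -> `|F' x| <= K) -> locLip F.
Proof.
move=> dF hB B; have [K HK] := hB B.
exists (Num.max K 0); split; first by rewrite le_max lexx orbT.
apply: (lip_of_der dF) => x hx.
by apply: le_trans (HK x hx) _; rewrite le_max lexx.
Qed.

Lemma exp_bnd (x B : R) : `|x| <= B -> expR x <= expR B /\ expR (- x) <= expR B.
Proof.
move=> hx; rewrite !ler_expR; split.
  by apply: le_trans hx; rewrite ler_norm.
by apply: le_trans hx; rewrite -normrN ler_norm.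
Qed.

Lemma locLip_Flam d m1 m2 h : locLip (Flam d m1 m2 h).
Proof.
apply: (locLip_of_der (@is_derive_Flam d m1 m2 h)) => B.
exists (`|d * (m1 + m2)| * expR B + `|2 * h * d ^+ 2| * (expR B ^+ 2 + expR B ^+ 2)).
move=> x /exp_bnd [e1 e2].
have ep := expR_gt0 x; have en := expR_gt0 (- x).
have hc : `|coshR x| <= expR B.
  rewrite /coshR ger0_norm; last by rewrite divr_ge0 // addr_ge0 ?ltW.
  by rewrite ler_pdivrMr //; lra.
have hs : `|sh x| <= expR B.
  rewrite /sh normrM [`|2^-1|]ger0_norm ?invr_ge0 //.
  rewrite ler_pdivrMr // ler_norml; apply/andP; split; lra.
rewrite /Flam'; apply: le_trans (ler_normD _ _) _.
apply: lerD; rewrite normrM; apply: ler_wpM2l => //.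
apply: le_trans (ler_normD _ _) _; apply: lerD; rewrite normrX;
  apply: lerXn2r => //; rewrite ?nnegrE ?expR_ge0 //.
Qed.

Lemma locLip_Fnu d m1 m2 h : locLip (Fnu d m1 m2 h).
Proof.
apply: (locLip_of_der (@is_derive_Fnu d m1 m2 h)) => B.
exists (`|d * (m1 - m2)| + `|2 * h * d ^+ 2| * (1 + 1)) => x _.
rewrite /Fnu'; apply: le_trans (ler_normB _ _) _.
apply: lerD; rewrite normrM.
  by rewrite ler_piMr // sin_max.
apply: ler_wpM2l => //; apply: le_trans (ler_normB _ _) _.
by apply: lerD; rewrite normrX expr_le1 // ?cos_max ?sin_max.
Qed.

Lemma per_int (X : Type) (f : R -> X) (T : R) : (forall t, f (t + T) = f t) ->
  forall (k : int) t, f (t + k%:~R * T) = f t.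
Proof.
move=> hT.
have Hn : forall (n : nat) t, f (t + n%:R * T) = f t.
  elim=> [|n IH] t; first by rewrite mul0r addr0.
  by rewrite -addn1 natrD mulrDl mul1r addrA hT IH.
case=> n t; first exact: Hn.
rewrite NegzE intrN mulNr.
by rewrite -(Hn n.+1 (t - n.+1%:R * T)) subrK.
Qed.

Lemma period_mult (X : Type) (f : R -> X) (T P : R) : min_period f T -> P != 0 ->
  (forall t, f (t + P) = f t) -> exists n : int, n != 0 /\ P = n%:~R * T.
Proof.
move=> [T0 hT hmin] P0 hP.
have key : forall Q, 0 < Q -> (forall t, f (t + Q) = f t) ->
    exists n : int, n != 0 /\ Q = n%:~R * T.
  move=> Q Q0 hQ.
  set n := Num.floor (Q / T).
  have h1 := real_floor_le (num_real (Q / T)).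
  have h2 := real_floorD1_gt (num_real (Q / T)).
  rewrite -/n in h1 h2; rewrite intrD /= in h2.
  have hr : forall t, f (t + (Q - n%:~R * T)) = f t.
    move=> t; rewrite -(per_int hT n (t + (Q - n%:~R * T))).
    by rewrite addrA subrK hQ.
  have r0 : 0 <= Q - n%:~R * T.
    by rewrite subr_ge0 -ler_pdivlMr.
  have rT : Q - n%:~R * T < T.
    by move: h2; rewrite ltr_pdivrMr // => ?; lra.
  have r00 : Q - n%:~R * T = 0.
    apply/eqP; apply/negPn/negP => rn0.
    apply: (hmin (Q - n%:~R * T)) => //.
    by rewrite rT andbT lt_def rn0 r0.
  exists n; split; last by move/eqP: r00; rewrite subr_eq0 => /eqP.
  apply/negP => /eqP n0; move: r00; rewrite n0 mul0r subr0 => Q00.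
  by move: Q0; rewrite Q00 ltxx.
case: (ltgtP P 0) => hP0; [| exact: key | by move: P0; rewrite hP0 eqxx].
have hN : forall t, f (t + - P) = f t by move=> t; rewrite -(hP (t - P)) subrK.
have P0' : 0 < - P by rewrite oppr_gt0.
have [n [n0 e]] := key (- P) P0' hN.
exists (- n); split; first by rewrite oppr_eq0.
by rewrite intrN mulNr -e opprK.
Qed.

Lemma derivs_of (f : R -> R) (t v : R) : derivable f t 1 -> derive1 f t = v ->
  is_derive t (1:R) f v.
Proof. by move=> /derivableP H; rewrite derive1E => <-. Qed.

Lemma orbit_derivs d m1 m2 h (lam plam nu pnu : R -> R) :
  is_orbit d m1 m2 h lam plam nu pnu ->
  [/\ forall t : R, is_derive t (1:R) lam (plam t),
      forall t : R, is_derive t (1:R) plam (Flam d m1 m2 h (lam t)),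
      forall t : R, is_derive t (1:R) nu (pnu t) &
      forall t : R, is_derive t (1:R) pnu (Fnu d m1 m2 h (nu t))].
Proof.
move=> H; split=> t; have [a b c e [e1 e2 e3 e4]] := H t.
- by apply: derivs_of; rewrite // e1 dHlam_p.
- by apply: derivs_of; rewrite // e2 dHlam_l opprK.
- by apply: derivs_of; rewrite // e3 dHnu_p.
- by apply: derivs_of; rewrite // e4 dHnu_l opprK.
Qed.

Lemma refl_sym (F : R -> R) (x y : R -> R) (c t1 : R) :
  locLip F ->
  (forall t : R, is_derive t (1:R) x (y t)) ->
  (forall t : R, is_derive t (1:R) y (F (x t))) ->
  (forall z, F (c - z) = - F z) -> x t1 = c - x t1 ->
  forall s, x s = c - x (2 * t1 - s) /\ y s = y (2 * t1 - s).
Proof.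
move=> LF dx dy Fs e1.
apply: (uniq_all (t0 := t1) LF dx dy).
- move=> t.
  have H1 := is_derive_refl (dx (2 * t1 - t)).
  have H2 := @is_deriveB _ _ _ (cst c) (fun s => x (2 * t1 - s)) t 1 0 _ (is_derive_cst c t 1) H1.
  rewrite sub0r opprK in H2; exact: H2.
- move=> t; rewrite Fs; exact: is_derive_refl.
- by rewrite -[2 * t1 - t1]/(2 * t1 - t1) (_ : 2 * t1 - t1 = t1) //; ring.
- by rewrite (_ : 2 * t1 - t1 = t1) //; ring.
Qed.

Lemma Flam_odd d m1 m2 h (z : R) : Flam d m1 m2 h (0 - z) = - Flam d m1 m2 h z.
Proof.
rewrite sub0r /Flam /sh /coshR opprK.
ring.
Qed.

Lemma Fnu_refl d m1 m2 h (j : int) (z : R) :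
  Fnu d m1 m2 h ((pi + j%:~R * (2 * pi)) - z) = - Fnu d m1 m2 h z.
Proof.
have e : pi + j%:~R * (2 * pi) - z = (pi - z) + j%:~R * (2 * pi) by ring.
have pc : forall t : R, cos (t + 2 * pi) = cos t.
  by move=> t; rewrite mulr_natl; exact: cosD2pi.
have ps : forall t : R, sin (t + 2 * pi) = sin t.
  by move=> t; rewrite mulr_natl; exact: sinD2pi.
rewrite e /Fnu (per_int pc) (per_int ps) cosB sinB cospi sinpi.
ring.
Qed.

Lemma coll_nu (lam nu : R -> R) t : collision lam nu t ->
  lam t = 0 /\ exists j : int, 2 * nu t = pi + j%:~R * (2 * pi).
Proof.
move=> [l0 [k [e|e]]]; split => //.
  by exists (2 * k); rewrite e intrM; field.
by exists (2 * k - 1); rewrite e intrB intrM; field.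
Qed.
End S.

Unset Implicit Arguments.
Set Strict Implicit.

Theorem corollary3 (R : realType) (d m1 m2 h g : R)
  (lam plam nu pnu : R -> R) (Tlam Tnu : R) :
  0 < d -> 0 < m1 -> 0 < m2 -> h < 0 ->
  is_orbit d m1 m2 h lam plam nu pnu ->
  (* the orbit lies on the set {H_lam = -g, H_nu = g} *)
  Hlam d m1 m2 h (lam 0) (plam 0) = - g ->
  Hnu d m1 m2 h (nu 0) (pnu 0) = g ->
  (* regular torus T = C_lam x C_nu *)
  regular_value (Hlam d m1 m2 h) (- g) ->
  regular_value (Hnu d m1 m2 h) g ->
  compact (connected_component
             [set x : R * R | Hlam d m1 m2 h x.1 x.2 = - g] (lam 0, plam 0)) ->
  compact (connected_component
             (@cyl R @` [set x : R * R | Hnu d m1 m2 h x.1 x.2 = g])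
             (cyl (nu 0, pnu 0))) ->
  (* tau-periods of the motions on C_lam and C_nu *)
  min_period (fun t => (lam t, plam t)) Tlam ->
  min_period (fun t => cyl (nu t, pnu t)) Tnu ->
  (* collisions at two distinct times *)
  (exists t1 t2, t1 != t2 /\ collision lam nu t1 /\ collision lam nu t2) ->
  (* rotation number W = Tnu / Tlam is rational *)
  exists r : rat, Tnu / Tlam = ratr r.
Proof.
move=> _ _ _ _ orb _ _ _ _ _ _ mpl mpn [t1 [t2 [t12 [c1 c2]]]].
have [dl dpl dn dpn] := orbit_derivs orb.
have [l1 [j1 n1]] := coll_nu c1.
have [l2 [j2 n2]] := coll_nu c2.
have LL := locLip_Flam d m1 m2 h.
have LN := locLip_Fnu d m1 m2 h.
have el1 : lam t1 = 0 - lam t1 by rewrite l1 subr0.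
have el2 : lam t2 = 0 - lam t2 by rewrite l2 subr0.
have en1 : nu t1 = pi + j1%:~R * (2 * pi) - nu t1 by rewrite -n1; ring.
have en2 : nu t2 = pi + j2%:~R * (2 * pi) - nu t2 by rewrite -n2; ring.
have RL1 := refl_sym (c := 0) (t1 := t1) LL dl dpl (@Flam_odd _ d m1 m2 h) el1.
have RL2 := refl_sym (c := 0) (t1 := t2) LL dl dpl (@Flam_odd _ d m1 m2 h) el2.
have RN1 := refl_sym (t1 := t1) LN dn dpn (@Fnu_refl _ d m1 m2 h j1) en1.
have RN2 := refl_sym (t1 := t2) LN dn dpn (@Fnu_refl _ d m1 m2 h j2) en2.
set P := 2 * (t2 - t1).
have eP : forall s, 2 * t2 - (s + P) = 2 * t1 - s by move=> s; rewrite /P; ring.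
have P0 : P != 0.
  rewrite /P mulf_eq0 negb_or subr_eq0 (eq_sym t2) t12 andbT.
  by rewrite pnatr_eq0.
have perL : forall s, (lam (s + P), plam (s + P)) = (lam s, plam s).
  move=> s; rewrite (RL2 (s + P)).1 (RL2 (s + P)).2 !eP.
  by rewrite (RL1 s).1 (RL1 s).2.
have perN : forall s, cyl (nu (s + P), pnu (s + P)) = cyl (nu s, pnu s).
  move=> s; rewrite (RN2 (s + P)).1 (RN2 (s + P)).2 !eP.
  have e : pi + j2%:~R * (2 * pi) - nu (2 * t1 - s) = nu s + (j2 - j1)%:~R * (2 * pi).
    rewrite (RN1 s).1 intrB; ring.
  have pc : forall t : R, cos (t + 2 * pi) = cos t.
    by move=> t; rewrite mulr_natl; exact: cosD2pi.
  have ps : forall t : R, sin (t + 2 * pi) = sin t.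
    by move=> t; rewrite mulr_natl; exact: sinD2pi.
  by rewrite /cyl /= e (per_int pc (j2 - j1) (nu s)) (per_int ps (j2 - j1) (nu s)) -(RN1 s).2.
have [k [k0 ek]] := period_mult mpl P0 perL.
have [n [n0 en]] := period_mult mpn P0 perN.
have Tl0 : Tlam != 0 by case: mpl => /lt0r_neq0.
have nR0 : (n%:~R : R) != 0 by rewrite intr_eq0.
exists (k%:Q / n%:Q); rewrite fmorph_div !rmorph_int.
apply/eqP; rewrite eqr_div //.
by rewrite mulrC -en ek mulrC.
Qed.
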